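(* Consider the context-free grammar with nonterminals $S,R$, terminals $\bullet,(,)$, start symbol $S$ and rules $$S\to \bullet \mid S\bullet \mid (R) \mid S(R),\qquad R\to (\bullet) \mid (R) \mid (S(R)) \mid (S\bullet).$$ Then the grammar is non-ambiguous, the language generated from $S$ is exactly the set of nonempty canonical secondary structures (in dot-bracket notation), and the language generated from $R$ is exactly the set of nonempty secondary structures $T$ such that $(T)$ is canonical.
   Context: A secondary structure on $[1,n]$ (with $\theta=1$) is a set of pairs $(i,j)$, $1\le i<j\le n$, with no crossing pairs ($i<k<j<\ell$), each position in at most one pair, and $j-i>1$ for each pair; it is written as a dot-bracket word over $\{\bullet,(,)\}$. It is canonical if there is no pair $(i,j)$ with both $(i-1,j+1)$ and $(i+1,j-1)$ absent. A grammar is non-ambiguous if no word has two distinct leftmost derivations. *)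

(* Defs.v *)
From mathcomp Require Import all_boot.
From Stdlib Require List.
Set Implicit Arguments. Unset Strict Implicit. Unset Printing Implicit Defensive.

(* Sentential forms are words over N + T (inl = nonterminal, inr = terminal). *)
Definition grammar (N T : Type) := N -> list (list (N + T)).

Definition is_terminal {N T : Type} (s : N + T) : bool :=
  if s is inr _ then true else false.

Definition step {N T : Type} (g : grammar N T) (u v : list (N + T)) : Prop :=
  exists (x : list (N + T)) (A : N) (y rhs : list (N + T)),
    List.In rhs (g A) /\ u = x ++ inl A :: y /\ v = x ++ rhs ++ y.

Definition lm_step {N T : Type} (g : grammar N T) (u v : list (N + T)) : Prop :=
  exists (x : list (N + T)) (A : N) (y rhs : list (N + T)),
    all is_terminal x /\ List.In rhs (g A) /\
    u = x ++ inl A :: y /\ v = x ++ rhs ++ y.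

Inductive derives {N T : Type} (g : grammar N T) :
  list (N + T) -> list (N + T) -> Prop :=
| derives_refl u : derives g u u
| derives_step u v w : step g u v -> derives g v w -> derives g u w.

Definition generates {N T : Type} (g : grammar N T) (A : N) (w : list T) : Prop :=
  derives g [:: inl A] (map inr w).

(* A leftmost derivation of w from A is recorded as the list d of the
   sentential forms following the initial form [A]; consecutive forms are
   related by leftmost steps and the last form is w. *)
Fixpoint lm_chain {N T : Type} (g : grammar N T) (u : list (N + T))
    (d : list (list (N + T))) : Prop :=
  match d with
  | [::] => True
  | v :: d' => lm_step g u v /\ lm_chain g v d'
  end.

Definition lm_derivation {N T : Type} (g : grammar N T) (A : N) (w : list T)
    (d : list (list (N + T))) : Prop :=
  lm_chain g [:: inl A] d /\ last [:: inl A] d = map inr w.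

Definition non_ambiguous {N T : Type} (g : grammar N T) (S : N) : Prop :=
  forall (w : list T) d1 d2,
    lm_derivation g S w d1 -> lm_derivation g S w d2 -> d1 = d2.

Inductive sym := Dot | Op | Cl.

(* A secondary structure on [1,n] (theta = 1): a set P of pairs (i,j). *)
Definition secstruct (n : nat) (P : nat -> nat -> bool) : Prop :=
  (forall i j, P i j -> [/\ 1 <= i, i < j, j <= n & j - i > 1]) /\
  (forall i j k l, P i j -> P k l -> ~ (i < k /\ k < j /\ j < l)) /\
  (forall i j k l p, P i j -> P k l -> (p = i \/ p = j) -> (p = k \/ p = l) ->
     i = k /\ j = l).

Definition canonical (P : nat -> nat -> bool) : Prop :=
  forall i j, P i j -> P i.-1 j.+1 \/ P i.+1 j.-1.

Definition dotbracket (n : nat) (P : nat -> nat -> bool) : list sym :=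
  [seq (if has (P k) (iota 1 n) then Op
        else if has (fun i => P i k) (iota 1 n) then Cl else Dot)
  | k <- iota 1 n].

Definition ss_word (w : list sym) : Prop :=
  exists n P, secstruct n P /\ dotbracket n P = w.

Definition canon_ss_word (w : list sym) : Prop :=
  exists n P, secstruct n P /\ canonical P /\ dotbracket n P = w.

Inductive nt := NS | NR.

Definition rna_grammar : grammar nt sym := fun A =>
  match A with
  | NS => [:: [:: inr Dot];
              [:: inl NS; inr Dot];
              [:: inr Op; inl NR; inr Cl];
              [:: inl NS; inr Op; inl NR; inr Cl]]
  | NR => [:: [:: inr Op; inr Dot; inr Cl];
              [:: inr Op; inl NR; inr Cl];
              [:: inr Op; inl NS; inr Op; inl NR; inr Cl; inr Cl];
              [:: inr Op; inl NS; inr Dot; inr Cl]]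
  end.

(* Main.v *)
Require Import Defs.
From mathcomp Require Import all_boot.
From Stdlib Require Import Lia ZArith FunctionalExtensionality.
From Stdlib Require List.
Set Implicit Arguments. Unset Strict Implicit.

Ltac nl := unfold addn, subn, muln in *; lia.


Lemma split_cat (T : Type) (a b c d : seq T) :
  a ++ b = c ++ d -> exists m, (c = a ++ m /\ b = m ++ d) \/ (a = c ++ m /\ d = m ++ b).
Proof.
elim: a c => [|x a IH] [|y c] /=.
- move=> ->; exists [::]; by left.
- move=> ->; exists (y :: c); by left.
- move=> <-; exists (x :: a); by right.
- case=> -> /IH [m [[-> ->]|[-> ->]]]; exists m; [left|right]; by [].
Qed.

Fixpoint h (w : seq sym) : Z :=
  match w with
  | [::] => 0%Z
  | Op :: w' => (1 + h w')%Z
  | Cl :: w' => (h w' - 1)%Z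
  | Dot :: w' => h w'
  end.

Opaque Z.add Z.sub.
Lemma h_cat a b : h (a ++ b) = (h a + h b)%Z.
Proof. elim: a => [|[] a IH] /=; rewrite ?IH; lia. Qed.

Definition bal (w : seq sym) := (forall k, (0 <= h (take k w))%Z) /\ h w = 0%Z.

Lemma bal_nil : bal [::].
Proof. split => //= k. Qed.

Lemma bal_cat a b : bal a -> bal b -> bal (a ++ b).
Proof.
move=> [Ha1 Ha2] [Hb1 Hb2]; split; last by rewrite h_cat; lia.
move=> k; rewrite take_cat; case: ifP => _ //.
rewrite h_cat; have := Hb1 (k - size a); lia.
Qed.

Lemma bal_wrap a : bal a -> bal (Op :: a ++ [:: Cl]).
Proof.
move=> [Ha1 Ha2]; split; last by rewrite /= h_cat /=; lia.
case=> [|k] //=; rewrite take_cat; case: ifP => _.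
- have := Ha1 k; lia.
- rewrite h_cat Ha2; case: (k - size a) => [|[]] /=; lia.
Qed.

Lemma bal_dot a : bal a -> bal (a ++ [:: Dot]).
Proof. move=> Ha; apply: bal_cat => //; split => //= [[|[]]] //=. Qed.

Lemma bal_pre r m t : bal r -> r = m ++ t -> (0 <= h m)%Z.
Proof. move=> [H _] E; have := H (size m); by rewrite E take_size_cat. Qed.

Lemma bal_split s s' r r' : bal s -> bal s' -> bal r -> bal r' ->
  s ++ Op :: r = s' ++ Op :: r' -> s = s'.
Proof.
move=> Hs Hs' Hr Hr' /split_cat [[|x m] [[E1 E2]|[E1 E2]]];
  rewrite ?cats0 in E1 => //.
- case: E2 => Ex E2; subst x.
  have := bal_pre Hr E2; move: Hs' Hs => [_ H1] [_ H2].
  rewrite E1 h_cat /= in H1; lia.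
- case: E2 => Ex E2; subst x.
  have := bal_pre Hr' E2; move: Hs' Hs => [_ H1] [_ H2].
  rewrite E1 h_cat /= in H2; lia.
Qed.

(* word-level canonical structures *)
Inductive K : bool -> seq sym -> Prop :=
| K0 b : K b [::]
| K1 b w : K false w -> K b (w ++ [:: Dot])
| K2 b w y : K false w -> K true y -> y <> [::] ->
    K b (w ++ Op :: Op :: y ++ [:: Cl; Cl])
| K3 x : K true x -> x <> [::] -> K true (Op :: x ++ [:: Cl]).

Inductive GS : seq sym -> Prop :=
| GS1 : GS [:: Dot]
| GS2 s : GS s -> GS (s ++ [:: Dot])
| GS3 r : GR r -> GS (Op :: r ++ [:: Cl])
| GS4 s r : GS s -> GR r -> GS (s ++ Op :: r ++ [:: Cl])
with GR : seq sym -> Prop :=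
| GR1 : GR [:: Op; Dot; Cl]
| GR2 r : GR r -> GR (Op :: r ++ [:: Cl])
| GR3 s r : GS s -> GR r -> GR (Op :: s ++ Op :: r ++ [:: Cl; Cl])
| GR4 s : GS s -> GR (Op :: s ++ [:: Dot; Cl]).


Lemma K_to_G b w : K b w -> w <> [::] ->
  (b = false -> GS w) /\ GR (Op :: w ++ [:: Cl]).
Proof.
elim=> {b w} //.
- move=> b w _ IH _; split.
  + move=> _; case: w IH => [|x w] IH; first exact: GS1.
    apply: GS2; by case: (IH ltac:(done)) => /(_ erefl).
  + case: w IH => [|x w] IH; first exact: GR1.
    have := GR4 (proj1 (IH ltac:(done)) erefl); by do 4 rewrite /= -?catA.
- move=> b w y _ IHw _ IHy Hy _.
  have [_ Gy] := IHy Hy.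
  split.
  + move=> _; case: w IHw => [|x w] IHw.
    * have := GS3 Gy; by do 4 rewrite /= -?catA.
    * have := GS4 (proj1 (IHw ltac:(done)) erefl) Gy; by do 4 rewrite /= -?catA.
  + case: w IHw => [|x w] IHw.
    * have := GR2 (GR2 Gy); by do 4 rewrite /= -?catA.
    * have := GR3 (proj1 (IHw ltac:(done)) erefl) Gy; by do 4 rewrite /= -?catA.
- move=> x _ IH Hx _; split => //.
  apply: GR2; exact: (proj2 (IH Hx)).
Qed.

Lemma GtoKS w : GS w -> K false w
with GtoKR w : GR w -> exists y, w = Op :: y ++ [:: Cl] /\ K true y /\ y <> [::].
Proof.
- case=> {w}.
  + exact: (K1 false (K0 false)).
  + move=> s Hs; exact: K1 (GtoKS _ Hs).
  + move=> r Hr; have [y [-> [Ky Hy]]] := GtoKR _ Hr.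
    have := K2 false (K0 false) Ky Hy; by do 4 rewrite /= -?catA.
  + move=> s r Hs Hr; have [y [-> [Ky Hy]]] := GtoKR _ Hr.
    have := K2 false (GtoKS _ Hs) Ky Hy; by do 4 rewrite /= -?catA.
- case=> {w}.
  + exists [:: Dot]; split => //; split => //; exact: (K1 true (K0 false)).
  + move=> r Hr; have [y [-> [Ky Hy]]] := GtoKR _ Hr.
    exists (Op :: y ++ [:: Cl]); split => //; split => //; exact: K3.
  + move=> s r Hs Hr; have [y [-> [Ky Hy]]] := GtoKR _ Hr.
    exists (s ++ Op :: Op :: y ++ [:: Cl; Cl]); split; first by do 4 rewrite /= -?catA.
    split; first exact: K2 (GtoKS _ Hs) Ky Hy.
    by case: s Hs.
  + move=> s Hs; exists (s ++ [:: Dot]); split; first by do 4 rewrite /= -?catA.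
    split; [exact: K1 (GtoKS _ Hs)| by case: s Hs].
Qed.

Lemma GS_ne w : GS w -> w <> [::].
Proof. by case=> //= [s|s r] _; case: s. Qed.

Implicit Types (P Q L I : nat -> nat -> bool).

Definition E : nat -> nat -> bool := fun _ _ => false.
Definition catS (n1 : nat) (P1 P2 : nat -> nat -> bool) : nat -> nat -> bool :=
  fun a b => P1 a b || (n1 < a) && P2 (a - n1) (b - n1).
Definition wrapS (m : nat) (Q : nat -> nat -> bool) : nat -> nat -> bool :=
  fun a b => ((a == 1) && (b == m.+2)) || (1 < a) && Q a.-1 b.-1.
Definition canonb (b : bool) (n : nat) (P : nat -> nat -> bool) : Prop :=
  forall i j, P i j -> P i.-1 j.+1 \/ P i.+1 j.-1 \/ (b = true /\ i = 1 /\ j = n).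

Lemma rng n P i j : secstruct n P -> P i j ->
  (1 <= i /\ i < j /\ j <= n /\ i.+1 < j)%coq_nat.
Proof.
case=> H _ /H [/leP ? /ltP ? /leP ? /ltP ?]; split; [nl|split; [nl|split; nl]].
Qed.

Lemma crs n P i j k l : secstruct n P -> P i j -> P k l ->
  (i < k)%coq_nat -> (k < j)%coq_nat -> (j < l)%coq_nat -> False.
Proof.
case=> _ [H _] Hij Hkl ? ? ?; apply: (H _ _ _ _ Hij Hkl).
split; [apply/ltP|split;apply/ltP]; done.
Qed.

Lemma unq n P i j k l p : secstruct n P -> P i j -> P k l ->
  (p = i \/ p = j) -> (p = k \/ p = l) -> i = k /\ j = l.
Proof. case=> _ [_ H]; exact: H. Qed.

Lemma mk_ss n P :
  (forall i j, P i j -> (1 <= i /\ i < j /\ j <= n /\ i.+1 < j)%coq_nat) ->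
  (forall i j k l, P i j -> P k l -> (i < k)%coq_nat -> (k < j)%coq_nat ->
      (j < l)%coq_nat -> False) ->
  (forall i j k l p, P i j -> P k l -> (p = i \/ p = j) -> (p = k \/ p = l) ->
      i = k /\ j = l) ->
  secstruct n P.
Proof.
move=> H1 H2 H3; split; [|split].
- move=> i j /H1 [? [? [? ?]]]; split; [apply/leP|apply/ltP|apply/leP|apply/ltP]; nl.
- move=> i j k l Hij Hkl [/ltP ? [/ltP ? /ltP ?]]; exact: H2 Hij Hkl _ _ _.
- exact: H3.
Qed.

Lemma catS_spec n1 n2 (P1 P2 : nat -> nat -> bool) a b : secstruct n1 P1 -> secstruct n2 P2 ->
  catS n1 P1 P2 a b <-> P1 a b \/ exists a' b', a = a' + n1 /\ b = b' + n1 /\ P2 a' b'.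
Proof.
move=> H1 H2; rewrite /catS; split.
- case/orP => [->|/andP [/ltP Ha HP]]; [by left|right].
  exists (a - n1), (b - n1); have := rng H2 HP => ?.
  split; [nl|split; [nl|done]].
- case=> [->//|[a' [b' [-> [-> HP]]]]]; apply/orP; right.
  have := rng H2 HP => ?; apply/andP; split; first (apply/ltP; nl).
  by rewrite !addnK.
Qed.

Lemma wrapS_spec m Q a b : secstruct m Q ->
  wrapS m Q a b <-> (a = 1 /\ b = m.+2) \/ exists a' b', a = a'.+1 /\ b = b'.+1 /\ Q a' b'.
Proof.
move=> H; rewrite /wrapS; split.
- case/orP => [/andP [/eqP -> /eqP ->]|/andP [/ltP Ha HQ]]; [by left|right].
  exists a.-1, b.-1; have := rng H HQ => ?; split; [nl|split; [nl|done]].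
- case=> [[-> ->]|[a' [b' [-> [-> HQ]]]]]; apply/orP; [left; by rewrite !eqxx | right].
  have := rng H HQ => ?; apply/andP; split; [apply/ltP; nl | done].
Qed.

Lemma E_ss n : secstruct n E.
Proof. by apply: mk_ss. Qed.

Lemma ss_cat n1 n2 (P1 P2 : nat -> nat -> bool) : secstruct n1 P1 -> secstruct n2 P2 ->
  secstruct (n1 + n2) (catS n1 P1 P2).
Proof.
move=> H1 H2; apply: mk_ss.
- move=> i j /(catS_spec _ _ H1 H2) [/(rng H1)|[a' [b' [-> [-> /(rng H2)]]]]] ?; nl.
- move=> i j k l /(catS_spec _ _ H1 H2) C1 /(catS_spec _ _ H1 H2) C2 ? ? ?.
  case: C1 C2 => [Pij|[a [b [Ea [Eb Pab]]]]] [Pkl|[c [d [Ec [Ed Pcd]]]]].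
  + exact: crs H1 Pij Pkl _ _ _.
  + have := rng H1 Pij; have := rng H2 Pcd; nl.
  + have := rng H2 Pab; have := rng H1 Pkl; nl.
  + apply: (crs H2 Pab Pcd); nl.
- move=> i j k l p /(catS_spec _ _ H1 H2) C1 /(catS_spec _ _ H1 H2) C2 Hp1 Hp2.
  case: C1 C2 => [Pij|[a [b [Ea [Eb Pab]]]]] [Pkl|[c [d [Ec [Ed Pcd]]]]].
  + exact: unq H1 Pij Pkl Hp1 Hp2.
  + exfalso; have := rng H1 Pij; have := rng H2 Pcd; nl.
  + exfalso; have := rng H2 Pab; have := rng H1 Pkl; nl.
  + have [? ?] := unq (p := p - n1) H2 Pab Pcd ltac:(nl) ltac:(nl); nl.
Qed.

Lemma ss_wrap m Q : secstruct m Q -> 0 < m -> secstruct m.+2 (wrapS m Q).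
Proof.
move=> H /ltP Hm; apply: mk_ss.
- move=> i j /(wrapS_spec _ _ H) [[-> ->]|[a' [b' [-> [-> /(rng H)]]]]]; nl.
- move=> i j k l /(wrapS_spec _ _ H) C1 /(wrapS_spec _ _ H) C2 ? ? ?.
  case: C1 C2 => [[Ea Eb]|[a [b [Ea [Eb Pab]]]]] [[Ec Ed]|[c [d [Ec [Ed Pcd]]]]].
  + nl.
  + have := rng H Pcd; nl.
  + nl.
  + apply: (crs H Pab Pcd); nl.
- move=> i j k l p /(wrapS_spec _ _ H) C1 /(wrapS_spec _ _ H) C2 Hp1 Hp2.
  case: C1 C2 => [[Ea Eb]|[a [b [Ea [Eb Pab]]]]] [[Ec Ed]|[c [d [Ec [Ed Pcd]]]]].
  + nl.
  + exfalso; have := rng H Pcd; nl.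
  + exfalso; have := rng H Pab; nl.
  + have [? ?] := unq (p := p.-1) H Pab Pcd ltac:(nl) ltac:(nl); nl.
Qed.

Lemma ss_S n P : secstruct n P -> secstruct n.+1 P.
Proof.
move=> H; apply: mk_ss.
- move=> i j /(rng H); nl.
- move=> i j k l; exact: crs H.
- move=> i j k l p; exact: unq H.
Qed.

Definition sf N (P : nat -> nat -> bool) k :=
  if has (P k) (iota 1 N) then Op
  else if has (fun i => P i k) (iota 1 N) then Cl else Dot.

Lemma db_sf n P : dotbracket n P = map (sf n P) (iota 1 n).
Proof. by []. Qed.

Lemma has_iota (p : pred nat) N :
  has p (iota 1 N) <-> exists b, (1 <= b /\ b <= N)%coq_nat /\ p b.
Proof.
split.
- move/hasP => [b]; rewrite mem_iota => /andP [/leP ? /ltP ?] Hb.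
  exists b; split => //; nl.
- move=> [b [[? ?] Hb]]; apply/hasP; exists b => //.
  rewrite mem_iota; apply/andP; split; [apply/leP|apply/ltP]; nl.
Qed.

Lemma sf_eq N P k N' Q k' :
  ((exists b, (1 <= b /\ b <= N)%coq_nat /\ P k b) <->
   (exists b, (1 <= b /\ b <= N')%coq_nat /\ Q k' b)) ->
  ((exists a, (1 <= a /\ a <= N)%coq_nat /\ P a k) <->
   (exists a, (1 <= a /\ a <= N')%coq_nat /\ Q a k')) ->
  sf N P k = sf N' Q k'.
Proof.
move=> E1 E2; rewrite /sf.
have ->: has (P k) (iota 1 N) = has (Q k') (iota 1 N').
  apply/idP/idP => /has_iota H; apply/has_iota; by apply/E1.
have -> //: has (fun i => P i k) (iota 1 N) = has (fun i => Q i k') (iota 1 N').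
apply/idP/idP => /has_iota H; apply/has_iota; by apply/E2.
Qed.

Lemma db_cat n1 n2 (P1 P2 : nat -> nat -> bool) : secstruct n1 P1 -> secstruct n2 P2 ->
  dotbracket (n1 + n2) (catS n1 P1 P2) = dotbracket n1 P1 ++ dotbracket n2 P2.
Proof.
move=> H1 H2; rewrite !db_sf iotaD map_cat; congr (_ ++ _).
- apply/eq_in_map => k; rewrite mem_iota => /andP [/leP ? /ltP ?].
  apply: sf_eq; split.
  + move=> [b [? /(catS_spec _ _ H1 H2) [Hb|[a' [b' [Ea [Eb Hab]]]]]]].
    * exists b; split => //; have := rng H1 Hb; nl.
    * exfalso; have := rng H2 Hab; nl.
  + move=> [b [? Hb]]; exists b; split; first (have := rng H1 Hb; nl).
    apply/(catS_spec _ _ H1 H2); by left.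
  + move=> [b [? /(catS_spec _ _ H1 H2) [Hb|[a' [b' [Ea [Eb Hab]]]]]]].
    * exists b; split => //; have := rng H1 Hb; nl.
    * exfalso; have := rng H2 Hab; nl.
  + move=> [b [? Hb]]; exists b; split; first (have := rng H1 Hb; nl).
    apply/(catS_spec _ _ H1 H2); by left.
- rewrite (addnC 1 n1) iotaDl -map_comp.
  apply/eq_in_map => k; rewrite mem_iota => /andP [/leP ? /ltP ?] /=.
  apply: sf_eq; split.
  + move=> [b [? /(catS_spec _ _ H1 H2) [Hb|[a' [b' [Ea [Eb Hab]]]]]]].
    * exfalso; have := rng H1 Hb; nl.
    * exists b'; have := rng H2 Hab => ?; split; first nl.
      have ->: k = a' by nl. done.
  + move=> [b [? Hb]]; exists (b + n1); split; first (have := rng H2 Hb; nl).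
    apply/(catS_spec _ _ H1 H2); right; exists k, b; split => //; nl.
  + move=> [b [? /(catS_spec _ _ H1 H2) [Hb|[a' [b' [Ea [Eb Hab]]]]]]].
    * exfalso; have := rng H1 Hb; nl.
    * exists a'; have := rng H2 Hab => ?; split; first nl.
      have ->: k = b' by nl. done.
  + move=> [b [? Hb]]; exists (b + n1); split; first (have := rng H2 Hb; nl).
    apply/(catS_spec _ _ H1 H2); right; exists b, k; split; [done|split; [nl|done]].
Qed.

Lemma db_wrap m Q : secstruct m Q ->
  dotbracket m.+2 (wrapS m Q) = Op :: dotbracket m Q ++ [:: Cl].
Proof.
move=> H; rewrite !db_sf.
have ->: iota 1 m.+2 = 1 :: iota 2 m ++ [:: m.+2].
  rewrite [in LHS](_ : m.+2 = 1 + (m + 1)); last by nl.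
  by rewrite !iotaD /= add2n.
rewrite /= map_cat /=; congr (_ :: _ ++ _).
- rewrite /sf; suff ->: has (wrapS m Q 1) (iota 1 m.+2) by [].
  apply/has_iota; exists m.+2; split; first nl.
  apply/(wrapS_spec _ _ H); by left.
- rewrite (_ : 2 = 1 + 1) // iotaDl -map_comp.
  apply/eq_in_map => k; rewrite mem_iota => /andP [/leP ? /ltP ?] /=.
  apply: sf_eq; split.
  + move=> [b [? /(wrapS_spec _ _ H) [[? ?]|[a' [b' [Ea [Eb Hab]]]]]]].
    * exfalso; nl.
    * exists b'; have := rng H Hab => ?; split; first nl.
      have ->: k = a' by nl. done.
  + move=> [b [? Hb]]; exists b.+1; split; first (have := rng H Hb; nl).
    apply/(wrapS_spec _ _ H); right; exists k, b; split => //; nl.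
  + move=> [b [? /(wrapS_spec _ _ H) [[? ?]|[a' [b' [Ea [Eb Hab]]]]]]].
    * exfalso; nl.
    * exists a'; have := rng H Hab => ?; split; first nl.
      have ->: k = b' by nl. done.
  + move=> [b [? Hb]]; exists b.+1; split; first (have := rng H Hb; nl).
    apply/(wrapS_spec _ _ H); right; exists b, k; split; [done|split; [nl|done]].
- rewrite /sf.
  have ->: has (wrapS m Q m.+2) (iota 1 m.+2) = false.
    apply/negbTE/negP => /has_iota [b [? /(wrapS_spec _ _ H) [[? ?]|[a' [b' [Ea [Eb Hab]]]]]]].
    * nl.
    * have := rng H Hab; nl.
  suff ->: has (fun i => wrapS m Q i m.+2) (iota 1 m.+2) by [].
  apply/has_iota; exists 1; split; first nl.
  apply/(wrapS_spec _ _ H); by left.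
Qed.

Lemma db_S n P : secstruct n P -> dotbracket n.+1 P = dotbracket n P ++ [:: Dot].
Proof.
move=> H; have := db_cat H (E_ss 1).
have ->: catS n P E = P.
  apply: functional_extensionality => a; apply: functional_extensionality => b.
  by rewrite /catS /E andbF orbF.
by rewrite addn1.
Qed.

Lemma db_size n P : size (dotbracket n P) = n.
Proof. by rewrite size_map size_iota. Qed.


Lemma decomp n P : secstruct n.+1 P ->
  (secstruct n P /\ forall a, P a n.+1 = false) \/
  exists i L I, secstruct i.-1 L /\ secstruct (n - i) I /\ 0 < n - i /\
    n.+1 = i.-1 + (n - i).+2 /\ P = catS i.-1 L (wrapS (n - i) I).
Proof.
move=> H.
case: (boolP (has (fun a => P a n.+1) (iota 1 n.+1))) => Hh.
- right; move/has_iota: Hh => [i [Hi Pi]].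
  have [? [? [? ?]]] := rng H Pi.
  pose L := fun a b => P a b && (b < i).
  pose I := fun a b => P (a + i) (b + i) && (0 < a) && (b + i <= n).
  have HL : secstruct i.-1 L.
    apply: mk_ss.
    + move=> a b /andP [Pab /ltP ?]; have := rng H Pab; nl.
    + move=> a b c d /andP [Pab _] /andP [Pcd _]; exact: crs H Pab Pcd.
    + move=> a b c d p /andP [Pab _] /andP [Pcd _]; exact: unq H Pab Pcd.
  have HI : secstruct (n - i) I.
    apply: mk_ss.
    + move=> a b /andP [/andP [Pab /ltP ?] /leP ?]; have := rng H Pab; nl.
    + move=> a b c d /andP [/andP [Pab _] _] /andP [/andP [Pcd _] _] ? ? ?.
      apply: (crs H Pab Pcd); nl.
    + move=> a b c d p /andP [/andP [Pab _] _] /andP [/andP [Pcd _] _] Hp1 Hp2.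
      have [? ?] := unq (p := p + i) H Pab Pcd ltac:(nl) ltac:(nl); nl.
  exists i, L, I; split => //; split => //; split; first (apply/ltP; nl).
  split; first nl.
  apply: functional_extensionality => a; apply: functional_extensionality => b.
  apply/idP/idP.
  + move=> Pab; apply/(catS_spec _ _ HL (ss_wrap HI ltac:(apply/ltP; nl))).
    have [? [? [? ?]]] := rng H Pab.
    case: (ltnP b i) => Hb.
    * left; by rewrite /L Pab Hb.
    * right; move/leP: Hb => Hb.
      case: (ltnP n b) => /leP Hbn.
      - have Eb : b = n.+1 by nl.
        have [Ea _] := unq (p := b) H Pab Pi (or_intror erefl) (or_intror Eb).
        exists 1, (n - i).+2; split; first nl; split; first nl.
        apply/(wrapS_spec _ _ HI); by left.
      - have Hbi : b <> i.
          move=> Ebi; have [_ ?] := unq (p := b) H Pab Pi (or_intror erefl) (or_introl Ebi); nl.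
        have Hai : a <> i.
          move=> Eai; have [_ ?] := unq (p := a) H Pab Pi (or_introl erefl) (or_introl Eai); nl.
        case: (ltnP a i) => /leP Ha.
        + exfalso; apply: (crs H Pab Pi); nl.
        + exists (a - i).+1, (b - i).+1; split; first nl; split; first nl.
          apply/(wrapS_spec _ _ HI); right; exists (a - i), (b - i); split => //; split => //.
          rewrite /I !subnK; [|apply/leP; nl|apply/leP; nl].
          rewrite Pab /=; apply/andP; split; [apply/ltP|apply/leP]; nl.
  + move/(catS_spec _ _ HL (ss_wrap HI ltac:(apply/ltP; nl))).
    case=> [/andP [] //|[a' [b' [Ea [Eb /(wrapS_spec _ _ HI) [[? ?]|[a'' [b'' [? [? HI']]]]]]]]]].
    * have -> : a = i by nl. have -> : b = n.+1 by nl. done.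
    * move: HI' => /andP [/andP [Pab _] _].
      have -> : a = a'' + i by nl. have -> : b = b'' + i by nl. done.
- left; split.
  + apply: mk_ss.
    * move=> i j Pij; have := rng H Pij => ?.
      have Hj : j <> n.+1.
        move=> Ej; apply: (negP Hh); apply/has_iota; exists i; split; first nl.
        by rewrite -Ej.
      nl.
    * move=> i j k l; exact: crs H.
    * move=> i j k l p; exact: unq H.
  + move=> a; apply/negbTE/negP => Pa; apply: (negP Hh); apply/has_iota.
    exists a; split => //; have := rng H Pa; nl.
Qed.


Lemma canon_cat n1 n2 (P1 P2 : nat -> nat -> bool) :
  secstruct n1 P1 -> secstruct n2 P2 ->
  canonb false n1 P1 -> canonb false n2 P2 -> canonb false (n1 + n2) (catS n1 P1 P2).
Proof.
move=> H1 H2 C1 C2 i j /(catS_spec _ _ H1 H2) [Pij|[a [b [-> [-> Pab]]]]].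
- case: (C1 _ _ Pij) => [H|[H|[//]]]; [left|right;left]; apply/(catS_spec _ _ H1 H2); by left.
- case: (C2 _ _ Pab) => [H|[H|[//]]]; [left|right;left]; apply/(catS_spec _ _ H1 H2); right.
  + exists a.-1, b.+1; have := rng H2 H; split; [nl|split; [nl|done]].
  + exists a.+1, b.-1; have := rng H2 H; split; [nl|split; [nl|done]].
Qed.

Lemma canon_wrap m Q b' : secstruct m Q -> canonb true m Q ->
  (b' = true \/ Q 1 m) -> canonb b' m.+2 (wrapS m Q).
Proof.
move=> H C Hb i j /(wrapS_spec _ _ H) [[-> ->]|[a [c [-> [-> Qac]]]]].
- case: Hb => [->|Hq]; [by right;right | right; left; apply/(wrapS_spec _ _ H); right].
  by exists 1, m.
- case: (C _ _ Qac) => [Hq|[Hq|[_ [-> ->]]]].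
  + left; apply/(wrapS_spec _ _ H); right; exists a.-1, c.+1.
    have := rng H Hq; split; [nl|split; [nl|done]].
  + right; left; apply/(wrapS_spec _ _ H); right; exists a.+1, c.-1.
    have := rng H Hq; split; [nl|split; [nl|done]].
  + left; apply/(wrapS_spec _ _ H); by left.
Qed.

Lemma canon_weak n n' P b : canonb false n P -> canonb b n' P.
Proof. by move=> C i j /C [?|[?|[E _]]]; [left|right;left|]. Qed.

Lemma canon_cat_l b n1 n2 L R : secstruct n1 L -> secstruct n2 R -> 0 < n2 ->
  canonb b (n1 + n2) (catS n1 L R) -> canonb false n1 L.
Proof.
move=> H1 H2 /ltP Hn C i j Lij.
have := C i j (proj2 (catS_spec _ _ H1 H2) (or_introl Lij)).
have := rng H1 Lij => ?.
case=> [/(catS_spec _ _ H1 H2) [Hq|[a [c [Ea [Eb Hac]]]]]|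
        [/(catS_spec _ _ H1 H2) [Hq|[a [c [Ea [Eb Hac]]]]]|[_ [? ?]]]].
- by left.
- exfalso; have := rng H2 Hac; nl.
- by right; left.
- exfalso; have := rng H2 Hac; nl.
- exfalso; nl.
Qed.

Lemma canon_cat_r b n1 n2 L R : secstruct n1 L -> secstruct n2 R ->
  canonb b (n1 + n2) (catS n1 L R) -> canonb (b && (n1 == 0)) n2 R.
Proof.
move=> H1 H2 C i j Rij.
have := C (i + n1) (j + n1).
have Hc : catS n1 L R (i + n1) (j + n1).
  apply/(catS_spec _ _ H1 H2); right; by exists i, j.
move/(_ Hc) => {Hc}.
have := rng H2 Rij => ?.
case=> [/(catS_spec _ _ H1 H2) [Hq|[a [c [Ea [Eb Hac]]]]]|
        [/(catS_spec _ _ H1 H2) [Hq|[a [c [Ea [Eb Hac]]]]]|[Eb [Ei Ej]]]].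
- exfalso; have := rng H1 Hq; nl.
- left; have := rng H2 Hac => ?.
  have -> : i.-1 = a by nl. have -> : j.+1 = c by nl. done.
- exfalso; have := rng H1 Hq; nl.
- right; left; have := rng H2 Hac => ?.
  have -> : i.+1 = a by nl. have -> : j.-1 = c by nl. done.
- right; right; rewrite Eb; have -> : n1 = 0 by nl.
  split => //; nl.
Qed.

Lemma canon_wrap_inv b' m Q : secstruct m Q ->
  canonb b' m.+2 (wrapS m Q) -> canonb true m Q /\ (b' = true \/ Q 1 m).
Proof.
move=> H C; split.
- move=> i j Qij; have := rng H Qij => ?.
  have Hc : wrapS m Q i.+1 j.+1 by apply/(wrapS_spec _ _ H); right; exists i, j.
  move: (C _ _ Hc) => {Hc}.
  case=> [/(wrapS_spec _ _ H) [[Ei Ej]|[a [c [Ea [Eb Hac]]]]]|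
          [/(wrapS_spec _ _ H) [[Ei Ej]|[a [c [Ea [Eb Hac]]]]]|[_ [Ei _]]]].
  + right; right; split => //; nl.
  + left; have -> : i.-1 = a by nl. have -> : j.+1 = c by nl. done.
  + exfalso; nl.
  + right; left; have -> : i.+1 = a by nl. have -> : j.-1 = c by nl. done.
  + exfalso; nl.
- have Hc : wrapS m Q 1 m.+2 by apply/(wrapS_spec _ _ H); left.
  move: (C _ _ Hc) => {Hc}.
  case=> [/(wrapS_spec _ _ H) [[Ei Ej]|[a [c [Ea [Eb Hac]]]]]|
          [/(wrapS_spec _ _ H) [[Ei Ej]|[a [c [Ea [Eb Hac]]]]]|[Eb _]]].
  + exfalso; nl.
  + exfalso; nl.
  + exfalso; nl.
  + right; have -> : 1 = a by nl. have -> : m = c by nl. done.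
  + by left.
Qed.

Lemma canon_unp b n P : canonb b n.+1 P -> (forall a, P a n.+1 = false) ->
  canonb false n P.
Proof.
move=> C Hn i j Pij; case: (C _ _ Pij) => [?|[?|[_ [_ Ej]]]]; [by left|by right;left|].
by rewrite Ej Hn in Pij.
Qed.

Lemma db_nil n P : secstruct n P -> n = 0 -> dotbracket n P = [::].
Proof. by move=> _ ->. Qed.

Lemma SK N : forall n P b, n < N -> secstruct n P -> canonb b n P ->
  K b (dotbracket n P).
Proof.
elim: N => [//|N IH] [|n] P b Hn H C; first exact: K0.
case: (decomp H) => [[H' Hu]|[i [L [I [HL [HI [Hk [Hsz EP]]]]]]]].
- rewrite db_S //; apply: K1; apply: IH => //; exact: canon_unp C Hu.
- move: C H; rewrite EP Hsz => C H.
  set k := n - i in HI Hk Hsz C H *.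
  have HW := ss_wrap HI Hk.
  rewrite db_cat // db_wrap //.
  have CL := canon_cat_l HL HW (ltn0Sn _) C.
  have [CI Hb] := canon_wrap_inv HI (canon_cat_r HL HW C).
  have KL : K false (dotbracket i.-1 L) by apply: IH => //; apply/ltP; move/ltP: Hn; nl.
  case: Hb => [/andP [/eqP Eb /eqP Ei]|HI1].
  + rewrite (eqP Eb) Ei /=; apply: K3.
    * apply: IH => //; apply/ltP; move/ltP: Hn; nl.
    * move=> E0; move/ltP: Hk; have := db_size k I; rewrite E0 /=; nl.
  + move: Hk HI HW C CI HI1 Hsz {H}; case: k => [//|k1] Hk HI HW C CI HI1 Hsz.
    case: (decomp HI) => [[_ Hu]|[i2 [L2 [I2 [HL2 [HI2 [Hk2 [Hsz2 EP2]]]]]]]].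
    * by rewrite Hu in HI1.
    have Ei2 : i2.-1 = 0.
      move: HI1; rewrite EP2 => /(catS_spec _ _ HL2 (ss_wrap HI2 Hk2)) [H1|[a [c [Ea [_ Hac]]]]].
      - have := rng HL2 H1; nl.
      - have := rng (ss_wrap HI2 Hk2) Hac; nl.
    move: CI; rewrite EP2 Hsz2 Ei2 => CI.
    have HL2' : secstruct 0 L2 by rewrite -Ei2.
    have [CI2 _] := canon_wrap_inv HI2 (canon_cat_r HL2' (ss_wrap HI2 Hk2) CI).
    rewrite db_cat // ?db_wrap //; last exact: ss_wrap.
    rewrite /= -catA /=.
    apply: K2 => //.
    * apply: IH => //; apply/ltP; move/ltP: Hn; move/ltP: Hk2; nl.
    * move=> E0; move/ltP: Hk2; have := db_size (k1 - i2) I2; rewrite E0 /=; nl.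
Qed.

Lemma KS b w : K b w -> exists n P, secstruct n P /\ canonb b n P /\ dotbracket n P = w.
Proof.
elim=> {b w}.
- move=> b; exists 0, E; split; first exact: E_ss; split => //.
- move=> b w _ [n [P [H [C D]]]]; exists n.+1, P; split; first exact: ss_S.
  split; first exact: canon_weak C.
  by rewrite db_S // D.
- move=> b w y _ [n1 [P1 [H1 [C1 D1]]]] _ [m [Q [H [C D]]]] Hy.
  have Hm : 0 < m.
    rewrite lt0n; apply/eqP => Em; apply: Hy; by rewrite -D Em.
  have HW := ss_wrap H Hm.
  have HW2 := ss_wrap HW (ltn0Sn _).
  exists (n1 + m.+4), (catS n1 P1 (wrapS m.+2 (wrapS m Q))).
  split; first exact: ss_cat.
  split.
  + apply: (canon_weak (n := n1 + m.+4)); apply: canon_cat => //.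
    apply: canon_wrap => //; last by right; apply/(wrapS_spec _ _ H); left.
    apply: canon_wrap => //; by left.
  + by rewrite db_cat // !db_wrap // D D1 /= -catA.
- move=> x _ [m [Q [H [C D]]]] Hx.
  have Hm : 0 < m.
    rewrite lt0n; apply/eqP => Em; apply: Hx; by rewrite -D Em.
  exists m.+2, (wrapS m Q); split; first exact: ss_wrap.
  split; first by apply: canon_wrap => //; left.
  by rewrite db_wrap // D.
Qed.

Lemma ss_bal N : forall n P, n < N -> secstruct n P -> bal (dotbracket n P).
Proof.
elim: N => [//|N IH] [|n] P Hn H; first exact: bal_nil.
case: (decomp H) => [[H' Hu]|[i [L [I [HL [HI [Hk [Hsz EP]]]]]]]].
- rewrite db_S //; apply: bal_dot; exact: IH.
- rewrite EP Hsz db_cat //; last exact: ss_wrap.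
  rewrite db_wrap //; apply: bal_cat; last apply: bal_wrap.
  + apply: IH => //; apply/ltP; move/ltP: Hn; nl.
  + apply: IH => //; apply/ltP; move/ltP: Hn; nl.
Qed.

Lemma ssword_bal w : ss_word w -> bal w.
Proof. move=> [n [P [H <-]]]; exact: (ss_bal (ltnSn n) H). Qed.

Lemma canon_iff n P : canonical P <-> canonb false n P.
Proof.
split.
- by move=> C i j /C [?|?]; [left|right;left].
- by move=> C i j /C [?|[?|[E _]]]; [left|right|].
Qed.

Lemma canon_K w : canon_ss_word w <-> K false w.
Proof.
split.
- move=> [n [P [H [C <-]]]]; apply: (SK (ltnSn n) H); exact/canon_iff.
- move/KS => [n [P [H [C D]]]]; exists n, P; split => //; split => //.
  exact/(canon_iff n).
Qed.

Lemma K_bal b w : K b w -> bal w.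
Proof. move/KS => [n [P [H [_ <-]]]]; exact: (ss_bal (ltnSn n) H). Qed.

Lemma K_ss b w : K b w -> ss_word w.
Proof. move/KS => [n [P [H [_ D]]]]; by exists n, P. Qed.

Definition GA (A : nt) := match A with NS => GS | NR => GR end.

Fixpoint YG (u : seq (nt + sym)) (w : seq sym) : Prop :=
  match u with
  | [::] => w = [::]
  | inr t :: u' => exists w', w = t :: w' /\ YG u' w'
  | inl A :: u' => exists w1 w2, w = w1 ++ w2 /\ GA A w1 /\ YG u' w2
  end.

Lemma YG_cat a b w : YG (a ++ b) w <-> exists w1 w2, w = w1 ++ w2 /\ YG a w1 /\ YG b w2.
Proof.
elim: a w => [|[A|t] a IH] w /=.
- split; [move=> H; by exists [::], w | by move=> [w1 [w2 [-> [-> H]]]]].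
- split.
  + move=> [w1 [w2 [-> [HA /IH [w3 [w4 [-> [H3 H4]]]]]]]].
    exists (w1 ++ w3), w4; rewrite catA; split => //; split => //; by exists w1, w3.
  + move=> [w1 [w2 [-> [[w3 [w4 [-> [HA H4]]]] H2]]]].
    exists w3, (w4 ++ w2); rewrite catA; split => //; split => //; apply/IH.
    by exists w4, w2.
- split.
  + move=> [w' [-> /IH [w3 [w4 [-> [H3 H4]]]]]].
    exists (t :: w3), w4; split => //; split => //; by exists w3.
  + move=> [w1 [w2 [-> [[w3 [-> H3]] H2]]]].
    exists (w3 ++ w2); split => //; apply/IH; by exists w3, w2.
Qed.

Lemma YG_map w : YG (map inr w) w.
Proof. elim: w => [|t w IH] //=; by exists w. Qed.

Lemma YG_map_inv t w : YG (map inr t) w -> w = t.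
Proof. elim: t w => [|x t IH] w /=; [done|by move=> [w' [-> /IH ->]]]. Qed.

Lemma YG1 A w : YG [:: inl A] w <-> GA A w.
Proof.
split => /=; [by move=> [w1 [w2 [-> [H ->]]]]; rewrite cats0|].
move=> H; exists w, [::]; by rewrite cats0.
Qed.

Lemma rule_sound A rhs w : List.In rhs (rna_grammar A) -> YG rhs w -> GA A w.
Proof.
case: A => /=.
- case=> [<-|[<-|[<-|[<-|[]]]]] /=.
  + by move=> [w' [-> ->]]; exact: GS1.
  + by move=> [w1 [w2 [-> [H [w' [-> ->]]]]]]; exact: GS2.
  + move=> [w' [-> [w1 [w2 [-> [H [w3 [-> ->]]]]]]]]; exact: GS3.
  + move=> [w1 [w2 [-> [H [w3 [-> [w4 [w5 [-> [H' [w6 [-> ->]]]]]]]]]]]].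
    exact: GS4.
- case=> [<-|[<-|[<-|[<-|[]]]]] /=.
  + by move=> [w1 [-> [w2 [-> [w3 [-> ->]]]]]]; exact: GR1.
  + move=> [w' [-> [w1 [w2 [-> [H [w3 [-> ->]]]]]]]]; exact: GR2.
  + move=> [w0 [-> [w1 [w2 [-> [H [w3 [-> [w4 [w5 [-> [H' [w6 [-> [w7 [-> ->]]]]]]]]]]]]]]]].
    exact: GR3 H H'.
  + move=> [w0 [-> [w1 [w2 [-> [H [w3 [-> [w4 [-> ->]]]]]]]]]].
    exact: GR4.
Qed.

Lemma step_back u v w : step rna_grammar u v -> YG v w -> YG u w.
Proof.
move=> [x [A [y [rhs [Hin [-> ->]]]]]] /YG_cat [w1 [w2 [-> [H1 /YG_cat [w3 [w4 [-> [H3 H4]]]]]]]].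
apply/YG_cat; exists w1, (w3 ++ w4); split => //; split => //=.
exists w3, w4; split => //; split => //; exact: rule_sound Hin H3.
Qed.

Lemma derives_YG u v : derives rna_grammar u v -> forall w, v = map inr w -> YG u w.
Proof.
elim=> {u v} [u w ->|u v z Huv _ IH w Ez]; first exact: YG_map.
exact: step_back Huv (IH w Ez).
Qed.

Lemma derives_trans u v z : derives rna_grammar u v -> derives rna_grammar v z ->
  derives rna_grammar u z.
Proof. elim=> {u v} // u v z' H _ IH /IH; exact: derives_step. Qed.

Lemma derives_catl u u' v : derives rna_grammar u u' ->
  derives rna_grammar (u ++ v) (u' ++ v).
Proof.
elim=> {u u'} [u|u u' z [x [A [y [rhs [Hin [-> ->]]]]]] _ IH]; first exact: derives_refl.
apply: derives_step IH; exists x, A, (y ++ v), rhs; split => //.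
by rewrite -!catA.
Qed.

Lemma derives_catr u v v' : derives rna_grammar v v' ->
  derives rna_grammar (u ++ v) (u ++ v').
Proof.
elim=> {v v'} [v|v v' z [x [A [y [rhs [Hin [-> ->]]]]]] _ IH]; first exact: derives_refl.
apply: derives_step IH; exists (u ++ x), A, y, rhs; split => //.
by rewrite -!catA.
Qed.

Lemma derives_cat u u' v v' : derives rna_grammar u u' -> derives rna_grammar v v' ->
  derives rna_grammar (u ++ v) (u' ++ v').
Proof.
move=> H1 H2; apply: derives_trans (derives_catl v H1) (derives_catr u' H2).
Qed.

Lemma derives_rule A rhs z : List.In rhs (rna_grammar A) ->
  derives rna_grammar rhs z -> derives rna_grammar [:: inl A] z.
Proof.
move=> Hin H; apply: derives_step H; exists [::], A, [::], rhs; split => //.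
by rewrite cats0.
Qed.

Lemma dterm (t : sym) : derives rna_grammar [:: inr t] (map inr [:: t]).
Proof. exact: derives_refl. Qed.

Lemma GS_derives w : GS w -> derives rna_grammar [:: inl NS] (map inr w)
with GR_derives w : GR w -> derives rna_grammar [:: inl NR] (map inr w).
Proof.
- case=> {w}.
  + apply: (derives_rule (rhs := [:: inr Dot])); [by left|exact: derives_refl].
  + move=> s Hs; apply: (derives_rule (rhs := [:: inl NS; inr Dot])); first by right; left.
    rewrite map_cat; apply: (derives_cat (u := [:: inl NS])); [exact: GS_derives|exact: dterm].
  + move=> r Hr; apply: (derives_rule (rhs := [:: inr Op; inl NR; inr Cl])); first by do 2 right; left.
    rewrite /= map_cat; apply: (derives_cat (u := [:: inr Op]) (dterm _)).
    apply: (derives_cat (u := [:: inl NR])); [exact: GR_derives|exact: dterm].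
  + move=> s r Hs Hr; apply: (derives_rule (rhs := [:: inl NS; inr Op; inl NR; inr Cl])).
      by do 3 right; left.
    rewrite map_cat; apply: (derives_cat (u := [:: inl NS])); first exact: GS_derives.
    rewrite /= map_cat; apply: (derives_cat (u := [:: inr Op]) (dterm _)).
    apply: (derives_cat (u := [:: inl NR])); [exact: GR_derives|exact: dterm].
- case=> {w}.
  + apply: (derives_rule (rhs := [:: inr Op; inr Dot; inr Cl])); [by left|exact: derives_refl].
  + move=> r Hr; apply: (derives_rule (rhs := [:: inr Op; inl NR; inr Cl])); first by right; left.
    rewrite /= map_cat; apply: (derives_cat (u := [:: inr Op]) (dterm _)).
    apply: (derives_cat (u := [:: inl NR])); [exact: GR_derives|exact: dterm].
  + move=> s r Hs Hr.
    apply: (derives_rule (rhs := [:: inr Op; inl NS; inr Op; inl NR; inr Cl; inr Cl])).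
      by do 2 right; left.
    rewrite /= map_cat; apply: (derives_cat (u := [:: inr Op]) (dterm _)).
    apply: (derives_cat (u := [:: inl NS])); first exact: GS_derives.
    rewrite /= map_cat; apply: (derives_cat (u := [:: inr Op]) (dterm _)).
    apply: (derives_cat (u := [:: inl NR])); [exact: GR_derives|exact: derives_refl].
  + move=> s Hs; apply: (derives_rule (rhs := [:: inr Op; inl NS; inr Dot; inr Cl])).
      by do 3 right; left.
    rewrite /= map_cat; apply: (derives_cat (u := [:: inr Op]) (dterm _)).
    apply: (derives_cat (u := [:: inl NS])); [exact: GS_derives|exact: derives_refl].
Qed.

Lemma gen_iff A w : generates rna_grammar A w <-> GA A w.
Proof.
split.
- move=> H; apply/YG1; exact: derives_YG H w erefl.
- case: A => /=; [exact: GS_derives|exact: GR_derives].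
Qed.

Lemma L_S w : GS w <-> w <> [::] /\ canon_ss_word w.
Proof.
split.
- move=> H; split; [exact: GS_ne|apply/canon_K; exact: GtoKS].
- move=> [Hne /canon_K Hk]; exact: (proj1 (K_to_G Hk Hne) erefl).
Qed.

Lemma L_R w : GR w <-> w <> [::] /\ ss_word w /\ canon_ss_word (Op :: rcons w Cl).
Proof.
split.
- move/GtoKR => [y [-> [Ky Hy]]]; split => //; split.
  + exact: K_ss (K3 Ky Hy).
  + apply/canon_K; have := K2 false (K0 false) Ky Hy.
    by rewrite /= -cats1 /= -!catA.
- move=> [Hne [Hss /canon_K Hk]].
  have Hb := ssword_bal Hss.
  move: Hk; move Ez: (Op :: rcons w Cl) => z; move Ef: false => b Hk.
  case: Hk Ez Ef => {b z}.
  + by [].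
  + move=> b0 w' _; rewrite cats1 -rcons_cons => /rcons_inj [] _ Hc _; discriminate Hc.
  + move=> b0 w' y Kw Ky Hy; case: w' Kw => [|x w''] Kw.
    * move=> [E] _.
      have : rcons w Cl = rcons (Op :: y ++ [:: Cl]) Cl by rewrite E -cats1 /= -catA.
      move=> /rcons_inj [->]; exact: (proj2 (K_to_G Ky Hy)).
    * move=> [Ex E] _; subst x.
      have : rcons w Cl = rcons (w'' ++ Op :: Op :: y ++ [:: Cl]) Cl.
        by rewrite E -cats1; do 4 rewrite /= -?catA.
      move=> /rcons_inj [] Ew; exfalso.
      have := bal_pre Hb Ew; have [_] := K_bal Kw.
      rewrite (_ : h (Op :: w'') = (1 + h w'')%Z) //; lia.
  + move=> x _ _ _ E; discriminate E.
Qed.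

Notation g := rna_grammar.

Lemma catl_inj (T : Type) (a b c : seq T) : a ++ b = a ++ c -> b = c.
Proof. by elim: a => [|x a IH] //= [/IH]. Qed.

Lemma catr_inj (T : Type) (a b c : seq T) : a ++ c = b ++ c -> a = b.
Proof.
move/(f_equal rev); rewrite !rev_cat => /catl_inj /(f_equal rev); by rewrite !revK.
Qed.

Lemma last_eq (T : Type) (a b : seq T) x y : a ++ [:: x] = b ++ [:: y] -> a = b /\ x = y.
Proof. by rewrite !cats1 => /rcons_inj [-> ->]. Qed.

Lemma GS_bal s : GS s -> bal s.
Proof. move/GtoKS; exact: K_bal. Qed.

Lemma GR_shape r : GR r -> exists y, r = Op :: y ++ [:: Cl] /\ bal y /\ y <> [::].
Proof. move/GtoKR => [y [-> [Ky Hy]]]; exists y; split => //; split => //; exact: K_bal Ky. Qed.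

Lemma GR_bal r : GR r -> bal r.
Proof. move/GR_shape => [y [-> [Hy _]]]; exact: bal_wrap. Qed.

Definition fam (i : nat) (w : seq sym) : Prop :=
  match i with
  | 1 => w = [:: Dot]
  | 2 => exists s, s <> [::] /\ w = s ++ [:: Dot]
  | 3 => exists y, bal y /\ w = Op :: y ++ [:: Cl]
  | 4 => exists s r, s <> [::] /\ bal s /\ bal r /\ w = s ++ Op :: r ++ [:: Cl]
  | _ => False
  end.

Lemma lastw (a : seq sym) x : a ++ [:: x] = (a ++ [:: x]). Proof. by []. Qed.

Lemma fam_disj i j w : fam i w -> fam j w -> i = j.
Proof.
have E4 : forall (s r : seq sym), s ++ Op :: r ++ [:: Cl] = (s ++ Op :: r) ++ [:: Cl].
  by move=> s r; rewrite -catA.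
have E3 : forall (y : seq sym), Op :: y ++ [:: Cl] = (Op :: y) ++ [:: Cl] by [].
have f12 : forall s, s <> [::] -> [:: Dot] = s ++ [:: Dot] -> False.
  move=> s Hs /(f_equal size); rewrite size_cat /= => E; apply: Hs.
  apply: size0nil; move: E; rewrite addn1; case=> E'; by rewrite -E'.
have f14 : forall s r, [:: Dot] = s ++ Op :: r ++ [:: Cl] -> False.
  move=> s r; rewrite E4 (_ : [:: Dot] = [::] ++ [:: Dot]) //; by move=> /(@last_eq sym) [].
have f23 : forall s y, s ++ [:: Dot] = Op :: y ++ [:: Cl] -> False.
  by move=> s y; rewrite E3 => /(@last_eq sym) [].
have f24 : forall s s' r, s ++ [:: Dot] = s' ++ Op :: r ++ [:: Cl] -> False.
  by move=> s s' r; rewrite E4 => /(@last_eq sym) [].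
have f34 : forall y s r, bal y -> s <> [::] -> bal s -> bal r ->
    Op :: y ++ [:: Cl] = s ++ Op :: r ++ [:: Cl] -> False.
  move=> y s r Hy Hs Hbs Hr; rewrite E3 E4 => /(@last_eq sym) [] E _.
  apply: Hs; have := @bal_split [::] s y r bal_nil Hbs Hy Hr E; by move=> <-.
case: i => [|[|[|[|[|i]]]]] //; case: j => [|[|[|[|[|j]]]]] //=; try by move=> _ _.
all: first [ move=> -> [s [Hs E]]; exfalso; exact: f12 Hs E
           | move=> -> [y [Hy E]]; discriminate E
           | move=> -> [s [r [Hs [Hbs [Hr E]]]]]; exfalso; exact: f14 E
           | move=> [s [Hs ->]] E; exfalso; exact: f12 Hs (esym E)
           | move=> [s [Hs ->]] [y [Hy E]]; exfalso; exact: f23 E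
           | move=> [s [Hs ->]] [s' [r [Hs' [Hbs [Hr E]]]]]; exfalso; exact: f24 E
           | move=> [y [Hy ->]] E; discriminate E
           | move=> [y [Hy ->]] [s [Hs E]]; exfalso; exact: f23 (esym E)
           | move=> [y [Hy ->]] [s [r [Hs [Hbs [Hr E]]]]]; exfalso; exact: f34 Hy Hs Hbs Hr E
           | move=> [s [r [Hs [Hbs [Hr ->]]]]] E; exfalso; exact: f14 (esym E)
           | move=> [s [r [Hs [Hbs [Hr ->]]]]] [s' [Hs' E]]; exfalso; exact: f24 (esym E)
           | move=> [s [r [Hs [Hbs [Hr ->]]]]] [y [Hy E]]; exfalso; exact: f34 Hy Hs Hbs Hr (esym E)
           | idtac ].
Qed.

Lemma famS1 w : YG [:: inr Dot] w -> fam 1 w.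
Proof. by move=> [w' [-> ->]]. Qed.
Lemma famS2 w : YG [:: inl NS; inr Dot] w -> fam 2 w.
Proof. move=> [w1 [w2 [-> [H [w' [-> ->]]]]]]; exists w1; split => //; exact: GS_ne. Qed.
Lemma famS3 w : YG [:: inr Op; inl NR; inr Cl] w -> fam 3 w.
Proof.
move=> [w' [-> [w1 [w2 [-> [H [w3 [-> ->]]]]]]]]; exists w1; split => //; exact: GR_bal.
Qed.
Lemma famS4 w : YG [:: inl NS; inr Op; inl NR; inr Cl] w -> fam 4 w.
Proof.
move=> [w1 [w2 [-> [H [w3 [-> [w4 [w5 [-> [H' [w6 [-> ->]]]]]]]]]]]].
exists w1, w4; split; first exact: GS_ne; split; first exact: GS_bal.
split => //; exact: GR_bal.
Qed.

Lemma famR1 w : YG [:: inr Op; inr Dot; inr Cl] w -> exists X, w = Op :: X ++ [:: Cl] /\ fam 1 X.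
Proof. move=> [w1 [-> [w2 [-> [w3 [-> ->]]]]]]; by exists [:: Dot]. Qed.
Lemma famR2 w : YG [:: inr Op; inl NR; inr Cl] w -> exists X, w = Op :: X ++ [:: Cl] /\ fam 3 X.
Proof.
move=> [w' [-> [w1 [w2 [-> [H [w3 [-> ->]]]]]]]]; exists w1; split => //.
have [y [-> [Hy _]]] := GR_shape H; by exists y.
Qed.
Lemma famR3 w : YG [:: inr Op; inl NS; inr Op; inl NR; inr Cl; inr Cl] w ->
  exists X, w = Op :: X ++ [:: Cl] /\ fam 4 X.
Proof.
move=> [w0 [-> [w1 [w2 [-> [H [w3 [-> [w4 [w5 [-> [H' [w6 [-> [w7 [-> ->]]]]]]]]]]]]]]]].
exists (w1 ++ Op :: w4 ++ [:: Cl]); split; first by do 4 rewrite /= -?catA.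
exists w1, w4; split; first exact: GS_ne; split; first exact: GS_bal.
split => //; exact: GR_bal.
Qed.
Lemma famR4 w : YG [:: inr Op; inl NS; inr Dot; inr Cl] w ->
  exists X, w = Op :: X ++ [:: Cl] /\ fam 2 X.
Proof.
move=> [w0 [-> [w1 [w2 [-> [H [w3 [-> [w4 [-> ->]]]]]]]]]].
exists (w1 ++ [:: Dot]); split; first by do 4 rewrite /= -?catA.
exists w1; split => //; exact: GS_ne.
Qed.

Ltac getS H := first [ move/famS1: H => H | move/famS2: H => H
                     | move/famS3: H => H | move/famS4: H => H ].
Ltac getR H := first [ move/famR1: H => H | move/famR2: H => H
                     | move/famR3: H => H | move/famR4: H => H ].

Lemma RD A r1 r2 w : List.In r1 (g A) -> List.In r2 (g A) -> YG r1 w -> YG r2 w -> r1 = r2.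
Proof.
case: A => /= H1 H2.
- case: H1 => [<-|[<-|[<-|[<-|[]]]]]; case: H2 => [<-|[<-|[<-|[<-|[]]]]] // => Y1 Y2;
    getS Y1; getS Y2; have E := fam_disj Y1 Y2; discriminate E.
- case: H1 => [<-|[<-|[<-|[<-|[]]]]]; case: H2 => [<-|[<-|[<-|[<-|[]]]]] // => Y1 Y2;
    getR Y1; getR Y2; move: Y1 Y2 => [X1 [E1 F1]] [X2 [E2 F2]];
    move: E2; rewrite E1 => [[]] /(@catr_inj sym) E; subst X2;
    have E' := fam_disj F1 F2; discriminate E'.
Qed.


Definition lmd u w d := lm_chain g u d /\ last u d = map inr w.

Lemma chain_derives u d : lm_chain g u d -> derives g u (last u d).
Proof.
elim: d u => [|v d IH] u /=; first by move=> _; exact: derives_refl.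
move=> [[x [A [y [rhs [_ [Hin [-> ->]]]]]]] Hc]; apply: derives_step (IH _ Hc).
by exists x, A, y, rhs.
Qed.

Lemma lmd_YG u w d : lmd u w d -> YG u w.
Proof. move=> [Hc Hl]; have := chain_derives Hc; rewrite Hl => H; exact: derives_YG H w erefl. Qed.

Lemma term_nostep u v : all is_terminal u -> lm_step g u v -> False.
Proof. move=> Ht [x [A [y [rhs [_ [_ [E _]]]]]]]; move: Ht; by rewrite E all_cat andbC. Qed.

Lemma lmd_term u w d : all is_terminal u -> lmd u w d -> d = [::].
Proof. by case: d => [//|v d] Ht [[Hs _] _]; exfalso; exact: term_nostep Ht Hs. Qed.

Lemma all_term_map w : all is_terminal (map inr w : seq (nt + sym)).
Proof. by elim: w. Qed.

Lemma LS u1 u2 v : lm_step g (u1 ++ u2) v ->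
  (exists v1, lm_step g u1 v1 /\ v = v1 ++ u2) \/
  (all is_terminal u1 /\ exists v2, lm_step g u2 v2 /\ v = u1 ++ v2).
Proof.
move=> [x [A [y [rhs [Hx [Hin [E ->]]]]]]].
case: (split_cat (esym E)) => [[|z m] [[E1 E2]|[E1 E2]]]; simpl in E2.
- rewrite cats0 in E1; subst u1 u2; right; split => //.
  exists (rhs ++ y); split => //; by exists [::], A, y, rhs.
- rewrite cats0 in E1; subst x u2; right; split => //.
  exists (rhs ++ y); split => //; by exists [::], A, y, rhs.
- case: E2 => Ez E2; subst z u1 y; left; exists (x ++ rhs ++ m); split.
  + by exists x, A, m, rhs.
  + by rewrite -!catA.
- subst x u2; move: Hx; rewrite all_cat => /andP [Hu1 Hm]; right; split => //.
  exists ((z :: m) ++ rhs ++ y); split; first by exists (z :: m), A, y, rhs.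
  by rewrite -!catA.
Qed.

Lemma map_split (u1 u2 : seq (nt + sym)) w : u1 ++ u2 = map inr w ->
  exists w1 w2, w = w1 ++ w2 /\ u1 = map inr w1 /\ u2 = map inr w2.
Proof.
move=> E; exists (take (size u1) w), (drop (size u1) w); split; first by rewrite cat_take_drop.
split.
- by rewrite map_take -E take_size_cat.
- by rewrite map_drop -E drop_size_cat.
Qed.

Lemma DEC d : forall u1 u2 w, lm_chain g (u1 ++ u2) d -> last (u1 ++ u2) d = map inr w ->
  exists d1 d2 w1 w2, w = w1 ++ w2 /\ lmd u1 w1 d1 /\ lmd u2 w2 d2 /\
    d = map (fun v => v ++ u2) d1 ++ map (fun v => map inr w1 ++ v) d2.
Proof.
elim: d => [|v d IH] u1 u2 w /=.
- move=> _ /map_split [w1 [w2 [-> [-> ->]]]].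
  by exists [::], [::], w1, w2.
- move=> [Hs Hc] Hl; move: Hc Hl.
  case: (LS Hs) => [[v1 [Hs1 ->]] Hc Hl|[Ht [v2 [Hs2 ->]]] Hc Hl].
  + have [d1 [d2 [w1 [w2 [-> [[Hc1 Hl1] [L2 ->]]]]]]] := IH _ _ _ Hc Hl.
    exists (v1 :: d1), d2, w1, w2; split => //; split => //.
  + have [d1 [d2 [w1 [w2 [-> [L1 [[Hc2 Hl2] ->]]]]]]] := IH _ _ _ Hc Hl.
    have Ed1 := lmd_term Ht L1; subst d1.
    move: L1 => [_ /= Eu1]; subst u1.
    by exists [::], (v2 :: d2), w1, w2.
Qed.

Definition UF B r := forall w1 w2 w1' w2', GA B w1 -> YG r w2 -> GA B w1' -> YG r w2' ->
  w1 ++ w2 = w1' ++ w2' -> w1 = w1'.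

Fixpoint goodform (u : seq (nt + sym)) : Prop :=
  match u with
  | [::] => True
  | inr _ :: r => goodform r
  | inl B :: r => has is_terminal r /\ UF B r /\ goodform r
  end.

Lemma YG_count u w : YG u w -> count is_terminal u <= size w.
Proof.
elim: u w => [|[A|t] u IH] w /=.
- by move=> ->.
- move=> [w1 [w2 [-> [_ /IH H]]]]; rewrite size_cat add0n; exact: leq_trans H (leq_addl _ _).
- by move=> [w' [-> /IH H]].
Qed.

Lemma FU M (IH : forall A w d1 d2, size w < M -> lmd [:: inl A] w d1 ->
                   lmd [:: inl A] w d2 -> d1 = d2) :
  forall u, goodform u -> forall w d1 d2, size w <= M -> lmd u w d1 -> lmd u w d2 -> d1 = d2.
Proof.
elim=> [|X u IHu] Hg w d1 d2 Hw L1 L2.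
- by rewrite (lmd_term _ L1) // (lmd_term _ L2).
- move: L1 L2 => [Hc1 Hl1] [Hc2 Hl2].
  have [d1a [d1b [w1 [w2 [Ew [La [Lb ->]]]]]]] := @DEC d1 [:: X] u w Hc1 Hl1.
  have [d2a [d2b [w1' [w2' [Ew' [La' [Lb' ->]]]]]]] := @DEC d2 [:: X] u w Hc2 Hl2.
  have Y1 := lmd_YG La; have Y2 := lmd_YG Lb.
  have Y1' := lmd_YG La'; have Y2' := lmd_YG Lb'.
  have Hw2 : forall w2', w2' = w2 -> size w2' <= M.
    by move=> _ ->; apply: leq_trans Hw; rewrite Ew size_cat leq_addl.
  destruct X as [B|t].
  + move: Hg => [Ht [Huf Hgu]].
    have E1 : w1 = w1'.
      apply: (Huf _ w2 _ w2') => //; [exact/YG1|exact/YG1|by rewrite -Ew -Ew'].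
    subst w1'; have E2 : w2 = w2' by apply: (@catl_inj sym w1); rewrite -Ew -Ew'.
    subst w2'.
    rewrite (IHu Hgu _ _ _ (Hw2 _ erefl) Lb Lb').
    congr (_ ++ _); congr (map _ _).
    apply: IH La La'.
    have := YG_count Y2; move: Ht; rewrite has_count => Ht Hc.
    have Hp : 0 < size w2 by apply: leq_trans Hc.
    move: Hw; rewrite Ew size_cat => Hw.
    apply: leq_trans Hw; rewrite -addn1 leq_add2l; exact: Hp.
  + have E1 : w1 = w1'.
      by rewrite (YG_map_inv (t := [:: t]) Y1) (YG_map_inv (t := [:: t]) Y1').
    subst w1'; have E2 : w2 = w2' by apply: (@catl_inj sym w1); rewrite -Ew -Ew'.
    subst w2'.
    rewrite (IHu Hg _ _ _ (Hw2 _ erefl) Lb Lb').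
    by rewrite (lmd_term _ La) // (lmd_term _ La').
Qed.

Lemma UF_term B (t : seq sym) : UF B (map inr t).
Proof.
move=> w1 w2 w1' w2' _ /YG_map_inv -> _ /YG_map_inv ->; exact: catr_inj.
Qed.

Lemma UF_OR (t : seq sym) : UF NS [:: inr Op, inl NR & map inr t].
Proof.
move=> w1 w2 w1' w2' H1 [w [-> [r [w3 [-> [Hr /YG_map_inv ->]]]]]]
  H1' [w' [-> [r' [w3' [-> [Hr' /YG_map_inv ->]]]]]].
rewrite -(cat_cons Op r t) -(cat_cons Op r' t) !catA => /(@catr_inj sym).
apply: bal_split; [exact: GS_bal|exact: GS_bal|exact: GR_bal|exact: GR_bal].
Qed.

Lemma good_rules A r : List.In r (g A) -> goodform r.
Proof.
case: A => /=.
- case=> [<-|[<-|[<-|[<-|[]]]]] //=.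
  + split => //; split => //; exact (@UF_term NS [:: Dot]).
  + split => //; split => //; exact (@UF_term NR [:: Cl]).
  + split => //; split; first exact (@UF_OR [:: Cl]).
    split => //; split => //; exact (@UF_term NR [:: Cl]).
- case=> [<-|[<-|[<-|[<-|[]]]]] //=.
  + split => //; split => //; exact (@UF_term NR [:: Cl]).
  + split => //; split; first exact (@UF_OR [:: Cl; Cl]).
    split => //; split => //; exact (@UF_term NR [:: Cl; Cl]).
  + split => //; split => //; exact (@UF_term NS [:: Dot; Cl]).
Qed.

Lemma step1 A v : lm_step g [:: inl A] v -> List.In v (g A).
Proof.
move=> [[|z x] [A' [y [rhs [_ [Hin [E ->]]]]]]].
- case: E => -> <-; by rewrite /= cats0.
- by case: E => _; case: x.
Qed.

Lemma lmd_nil A w : lmd [:: inl A] w [::] -> False.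
Proof. by move=> [_ /=]; case: w => [|x [|]]. Qed.

Lemma U M : forall A w d1 d2, size w < M -> lmd [:: inl A] w d1 -> lmd [:: inl A] w d2 ->
  d1 = d2.
Proof.
elim: M => [//|M IH] A w [|v1 d1] [|v2 d2] Hw L1 L2.
- by [].
- exfalso; exact: lmd_nil L1.
- exfalso; exact: lmd_nil L2.
- move: L1 L2 => [[Hs1 Hc1] Hl1] [[Hs2 Hc2] Hl2].
  have In1 := step1 Hs1; have In2 := step1 Hs2.
  have L1 : lmd v1 w d1 by split.
  have L2 : lmd v2 w d2 by split.
  have E := RD In1 In2 (lmd_YG L1) (lmd_YG L2); subst v2.
  congr (_ :: _); apply: (FU IH (good_rules In1) _ L1 L2); by [].
Qed.

Theorem mainTheorem3 :
  non_ambiguous rna_grammar NS /\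
  (forall w : list sym,
     generates rna_grammar NS w <-> w <> [::] /\ canon_ss_word w) /\
  (forall w : list sym,
     generates rna_grammar NR w <->
       w <> [::] /\ ss_word w /\ canon_ss_word (Op :: rcons w Cl)).
Proof.
split; first by move=> w d1 d2 L1 L2; exact: (U (ltnSn (size w)) L1 L2).
split => w; rewrite gen_iff /=; [exact: L_S|exact: L_R].
Qed.
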